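(* Let $K$ be a field. (i) If $\alpha=\beta+1$ is a countable non-limit ordinal, then there is a $K$-algebra isomorphism $B_{\alpha,1}\cong B_{\beta,1}\boxplus B_{\alpha,1}$. (ii) If $\gamma\ge0$ is a countable ordinal and $\alpha=\gamma+n$ for some $0<n<\omega$, then there is a $K$-algebra isomorphism $B_{\alpha,1}\cong B_{\gamma,1}\boxplus B_{\alpha,1}$. (iii) If $\alpha$ is a countable limit ordinal and $\beta<\alpha$, then there is a $K$-algebra isomorphism $B_{\alpha,1}\cong B_{\beta,1}\boxplus B_{\alpha,1}$.
   Context: For a sequence $\mathcal R=(R_i\mid i\in A)$ of $K$-algebras indexed by an infinite set $A$, $R(A,K,\mathcal R)$ is the $K$-subalgebra $\bigoplus_{i\in A}R_i\oplus1_P\cdot K$ of $P=\prod_{i\in A}R_i$; $\boxplus$ is ring direct product. Define $B_{0,1}=K$; $B_{\beta+1,1}=R(\aleph_0,K,\mathcal R)$ with $\mathcal R$ the constant sequence $R_m=B_{\beta,1}$ ($m<\aleph_0$); for limit $\alpha$, $B_{\alpha,1}=R(\alpha,K,(B_{\beta,1}\mid\beta<\alpha))$. *)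

(* Defs.v *)
From HB Require Import structures.
From mathcomp Require Import all_boot all_algebra.
From Stdlib Require Import ClassicalEpsilon List.
Set Implicit Arguments. Unset Strict Implicit. Unset Printing Implicit Defensive.
Import GRing.Theory.
Local Open Scope ring_scope.

Section Models.
Variable K : fieldType.

(* A K-algebra given concretely as a subset [amem] of K^carrier
   (with pointwise operations).  All algebras built below are
   subalgebras of such function algebras. *)
Record Model : Type := { carrier : Type; amem : (carrier -> K) -> Prop }.
Arguments amem : clear implicits.

Definition Kalg : Model := {| carrier := unit; amem := fun _ => True |}.

(* R(I,K,F) = (\bigoplus_i F i) + K.1  inside  \prod_i F i ;
   an element of \prod_i F i is encoded as a function on the disjoint union
   of the carriers. f is in the subalgebra iff every component is in F i and
   f - c.1 has finite support for some c in K. *)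
Definition Rsum (I : Type) (F : I -> Model) : Model :=
  {| carrier := {i : I & carrier (F i)};
     amem := fun f =>
       (forall i, amem (F i) (fun x => f (existT _ i x))) /\
       exists c : K, exists s : list I,
         forall i, (exists x, f (existT _ i x) <> c) -> List.In i s |}.

Definition boxplus (M N : Model) : Model :=
  {| carrier := (carrier M + carrier N)%type;
     amem := fun f => amem M (fun x => f (inl x)) /\ amem N (fun y => f (inr y)) |}.

Definition alg_iso (M N : Model) : Prop :=
  exists phi : (carrier M -> K) -> (carrier N -> K),
    [/\ (forall f, amem M f -> amem N (phi f)),
        (forall g, amem N g -> exists2 f, amem M f & phi f = g),
        (forall f g, amem M f -> amem M g -> phi f = phi g -> f = g) &
     [/\ 
        phi (fun _ => 1) = (fun _ => 1),
        (forall f g, amem M f -> amem M g ->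
           phi (fun x => f x + g x) = (fun y => phi f y + phi g y)),
        (forall f g, amem M f -> amem M g ->
           phi (fun x => f x * g x) = (fun y => phi f y * phi g y)) &
        (forall (c : K) f, amem M f ->
           phi (fun x => c * f x) = (fun y => c * phi f y))]].

(* Ordinals are represented as elements of a well-ordered type (T, ltT):
   the element w stands for the ordinal type of {v | ltT v w}. *)
Definition issucc (T : Type) (ltT : T -> T -> Prop) (v w : T) : Prop :=
  ltT v w /\ ~ (exists u, ltT v u /\ ltT u w).

Fixpoint nsucc (T : Type) (ltT : T -> T -> Prop) (n : nat) (g w : T) : Prop :=
  match n with
  | 0 => g = w
  | n'.+1 => exists v, nsucc ltT n' g v /\ issucc ltT v w
  end.

Definition is_limit (T : Type) (ltT : T -> T -> Prop) (w : T) : Prop :=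
  (exists v, ltT v w) /\ (forall v, ~ issucc ltT v w).

Definition Bstep (T : Type) (ltT : T -> T -> Prop) (w : T)
  (rec : forall v, ltT v w -> Model) : Model :=
  match excluded_middle_informative (exists v, issucc ltT v w) with
  | left H =>
      let (v, Hv) := constructive_indefinite_description _ H in
      Rsum (fun _ : nat => rec v (proj1 Hv))
  | right _ =>
      match excluded_middle_informative (exists v, ltT v w) with
      | left _ => Rsum (fun p : {v | ltT v w} => rec (proj1_sig p) (proj2_sig p))
      | right _ => Kalg
      end
  end.

Definition B (T : Type) (ltT : T -> T -> Prop) (wf : well_founded ltT) : T -> Model :=
  Fix wf (fun _ => Model) (@Bstep T ltT).

End Models.
Arguments amem {K} m _.

(* Main.v *)
Require Import Defs.
From mathcomp Require Import all_boot all_algebra.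
From Stdlib Require Import ClassicalEpsilon Classical FunctionalExtensionality List Eqdep_dec.
Set Implicit Arguments. Unset Strict Implicit. Unset Printing Implicit Defensive.
Import GRing.Theory.
Local Open Scope ring_scope.

Definition dec_eq (A : Type) (x y : A) : {x = y} + {x <> y} :=
  excluded_middle_informative (x = y).

Definition proj0 (I : Type) (C : I -> Type) (i0 : I) (p : {i : I & C i}) : option (C i0) :=
  match p with existT i x =>
    match dec_eq i i0 with left e => Some (eq_rect i C x i0 e) | right _ => None end end.

Lemma proj0_self I (C : I -> Type) i0 (y : C i0) : proj0 i0 (existT C i0 y) = Some y.
Proof.
rewrite /proj0; case: (dec_eq i0 i0) => [e|//].
by rewrite (UIP_dec (@dec_eq I) e erefl).
Qed.

Lemma proj0_other I (C : I -> Type) i0 i (x : C i) : i <> i0 -> proj0 i0 (existT C i x) = None.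
Proof. by rewrite /proj0; case: (dec_eq i i0). Qed.

Lemma proj0_some I (C : I -> Type) i0 p (y : C i0) : proj0 i0 p = Some y -> p = existT C i0 y.
Proof. case: p => i x; rewrite /proj0; case: (dec_eq i i0) => // e [<-]. by subst. Qed.

Section Aux.
Variable K : fieldType.

Lemma rsum_shift (M : Model K) :
  alg_iso (Rsum (fun _ : nat => M)) (boxplus M (Rsum (fun _ : nat => M))).
Proof.
pose C := fun _ : nat => carrier M.
pose Psi := fun (f : {n : nat & C n} -> K) (z : carrier M + {n : nat & C n}) =>
  match z with inl x => f (existT C 0%N x) | inr (existT n x) => f (existT C n.+1 x) end.
exists Psi; split.
- move=> f [Hc [c [s Hs]]]; split; first exact: (Hc 0%N).
  split; first by move=> n; exact: (Hc n.+1).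
  exists c, (List.map Nat.pred s) => n [x Hx].
  exact: (List.in_map Nat.pred s n.+1 (Hs n.+1 (ex_intro _ x Hx))).
- move=> h [HL [HRc [c [s Hs]]]].
  pose f := fun p : {n : nat & C n} => match p with
     | existT 0%N x => h (inl x) | existT n.+1 x => h (inr (existT C n x)) end.
  exists f.
  + split; first by case=> [|n]; [exact: HL | exact: (HRc n)].
    exists c, (0%N :: List.map S s) => -[|n] [x Hx]; first by left.
    right; apply: List.in_map; apply: Hs; exists x; exact: Hx.
  + by apply: functional_extensionality => -[x|[n x]].
- move=> f g _ _ e; apply: functional_extensionality => -[[|n] x].
  + exact: (congr1 (fun F => F (inl x)) e).
  + exact: (congr1 (fun F => F (inr (existT C n x))) e).
- split.
  + by apply: functional_extensionality => -[x|[n x]].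
  + by move=> f g _ _; apply: functional_extensionality => -[x|[n x]].
  + by move=> f g _ _; apply: functional_extensionality => -[x|[n x]].
  + by move=> c f _; apply: functional_extensionality => -[x|[n x]].
Qed.


Lemma rsum_absorb (I : Type) (F : I -> Model K) (S : Model K) (i0 : I) :
  alg_iso (F i0) (boxplus S (F i0)) -> alg_iso (Rsum F) (boxplus S (Rsum F)).
Proof.
case=> phi [phiM phiS phiI [phi1 phiD phiMul phiZ]].
pose C := fun i => carrier (F i).
pose r0 := fun (f : {i : I & C i} -> K) (x : C i0) => f (existT C i0 x).
pose Phi := fun (f : {i : I & C i} -> K) (z : carrier S + {i : I & C i}) =>
  match z with
  | inl s => phi (r0 f) (inl s)
  | inr p => match proj0 i0 p with Some y => phi (r0 f) (inr y) | None => f p end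
  end.
have Pmem : forall f, amem (Rsum F) f -> amem (boxplus S (Rsum F)) (Phi f).
  move=> f [Hc [c [s Hs]]].
  have [HL HR] := phiM _ (Hc i0).
  split; first exact: HL.
  split.
    move=> i; case: (dec_eq i i0) => [e|ne].
      subst i.
      have -> : (fun x => Phi f (inr (existT C i0 x))) = (fun x => phi (r0 f) (inr x)).
        by apply: functional_extensionality => x; rewrite /Phi proj0_self.
      exact: HR.
    have -> : (fun x => Phi f (inr (existT C i x))) = (fun x => f (existT C i x)).
      by apply: functional_extensionality => x; rewrite /Phi proj0_other.
    exact: Hc.
  exists c, (i0 :: s) => i [x Hx].
  case: (dec_eq i i0) => [->|ne]; first by left.
  right; apply: Hs; exists x; move: Hx; rewrite /Phi; rewrite (@proj0_other _ C i0 i x ne); exact id.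
exists Phi; split.
- exact: Pmem.
- move=> h [HL [HRc [c [s Hs]]]].
  pose k := fun z : carrier S + C i0 => match z with
    | inl x => h (inl x) | inr y => h (inr (existT C i0 y)) end.
  have Hk : amem (boxplus S (F i0)) k := conj HL (HRc i0).
  have [f0 Hf0 ef0] := phiS k Hk.
  pose f := fun p : {i : I & C i} =>
    match proj0 i0 p with Some y => f0 y | None => h (inr p) end.
  have r0f : r0 f = f0.
    by apply: functional_extensionality => x; rewrite /r0 /f proj0_self.
  exists f.
  + split.
      move=> i; case: (dec_eq i i0) => [e|ne].
        subst i; change (amem (F i0) (r0 f)); rewrite r0f; exact: Hf0.
      have -> : (fun x => f (existT C i x)) = (fun x => h (inr (existT C i x))).
        by apply: functional_extensionality => x; rewrite /f proj0_other.
      exact: HRc.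
    exists c, (i0 :: s) => i [x Hx].
    case: (dec_eq i i0) => [->|ne]; first by left.
    right; apply: Hs; exists x; move: Hx; rewrite /f (@proj0_other _ C i0 i x ne); exact id.
  + apply: functional_extensionality => -[x|p].
      by rewrite /Phi r0f ef0.
    rewrite /Phi; case E: (proj0 i0 p) => [y|].
      by rewrite r0f ef0 /k; rewrite (@proj0_some _ _ i0 p y E).
    by rewrite /f E.
- move=> f g Hf Hg e.
  have Hr : r0 f = r0 g.
    apply: phiI; [exact: (proj1 Hf i0) | exact: (proj1 Hg i0) |].
    apply: functional_extensionality => -[x|y].
      by have := congr1 (fun F => F (inl x)) e; rewrite /Phi.
    by have := congr1 (fun F => F (inr (existT C i0 y))) e; rewrite /Phi proj0_self.
  apply: functional_extensionality => p.
  case E: (proj0 i0 p) => [y|].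
    rewrite (@proj0_some _ _ i0 p y E); exact: (congr1 (fun F => F y) Hr).
  by have := congr1 (fun F => F (inr p)) e; rewrite /Phi E.
- split.
  + apply: functional_extensionality => -[x|p]; rewrite /Phi.
      by have -> : r0 (fun _ => 1) = (fun _ => 1) by []; rewrite phi1.
    case: (proj0 i0 p) => [y|] //.
    by have -> : r0 (fun _ => 1) = (fun _ => 1) by []; rewrite phi1.
  + move=> f g Hf Hg.
    have E : r0 (fun x => f x + g x) = (fun x => r0 f x + r0 g x) by [].
    have E2 := phiD _ _ (proj1 Hf i0) (proj1 Hg i0).
    apply: functional_extensionality => -[x|p]; rewrite /Phi E E2 //.
    by case: (proj0 i0 p).
  + move=> f g Hf Hg.
    have E : r0 (fun x => f x * g x) = (fun x => r0 f x * r0 g x) by [].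
    have E2 := phiMul _ _ (proj1 Hf i0) (proj1 Hg i0).
    apply: functional_extensionality => -[x|p]; rewrite /Phi E E2 //.
    by case: (proj0 i0 p).
  + move=> a f Hf.
    have E : r0 (fun x => a * f x) = (fun x => a * r0 f x) by [].
    have E2 := phiZ a _ (proj1 Hf i0).
    apply: functional_extensionality => -[x|p]; rewrite /Phi E E2 //.
    by case: (proj0 i0 p).
Qed.

End Aux.

Section Main.
Variables (K : fieldType) (T : Type) (ltT : T -> T -> Prop) (wf : well_founded ltT).
Hypothesis ltT_trans : forall x y z, ltT x y -> ltT y z -> ltT x z.
Hypothesis ltT_total : forall x y, ltT x y \/ x = y \/ ltT y x.

Lemma B_eq a : B K wf a = Bstep (fun v (_ : ltT v a) => B K wf v).
Proof.
rewrite /B; apply: Fix_eq => x f g H.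
have -> : f = g; last by [].
apply: functional_extensionality_dep => y; apply: functional_extensionality_dep => p.
exact: H.
Qed.

Lemma irrefl x : ~ ltT x x.
Proof.
elim: (wf x) => y _ IH Hyy; exact: (IH y Hyy Hyy).
Qed.

Lemma succ_uniq v b a : issucc ltT v a -> issucc ltT b a -> v = b.
Proof.
move=> [Hva Nv] [Hba Nb].
case: (ltT_total v b) => [H|[//|H]].
  by exfalso; apply: Nv; exists b.
by exfalso; apply: Nb; exists v.
Qed.

Lemma B_succ b a : issucc ltT b a -> B K wf a = Rsum (fun _ : nat => B K wf b).
Proof.
move=> Hb; rewrite B_eq /Bstep.
case: excluded_middle_informative => [H|H]; last by exfalso; apply: H; exists b.
case: constructive_indefinite_description => v Hv /=.
by rewrite (succ_uniq Hv Hb).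
Qed.

Lemma B_limit a : is_limit ltT a ->
  B K wf a = Rsum (fun p : {v | ltT v a} => B K wf (proj1_sig p)).
Proof.
move=> [Hex Hns]; rewrite B_eq /Bstep.
case: excluded_middle_informative => [[v Hv]|_]; first by exfalso; exact: (Hns v Hv).
by case: excluded_middle_informative.
Qed.

Lemma wf_min (P : T -> Prop) : (exists x, P x) -> exists m, P m /\ forall y, P y -> ~ ltT y m.
Proof.
move=> [x Px]; apply: NNPP => Hn.
suff : forall z, ~ P z by move/(_ x).
move=> z; elim: (wf z) => y _ IH Py.
apply: Hn; exists y; split => // w Pw Hw; exact: (IH w Hw Pw).
Qed.

Lemma part1 b a : issucc ltT b a -> alg_iso (B K wf a) (boxplus (B K wf b) (B K wf a)).
Proof. move=> H; rewrite (B_succ H); exact: rsum_shift. Qed.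

Lemma part2 n g a : (0 < n)%N -> nsucc ltT n g a ->
  alg_iso (B K wf a) (boxplus (B K wf g) (B K wf a)).
Proof.
elim: n a => [//|[|m] IH] a _ /=.
  by move=> [v [-> Hv]]; exact: part1.
move=> [v [Hn Hv]].
have Hi := IH v isT Hn.
rewrite (B_succ Hv).
exact: (@rsum_absorb K nat (fun _ => B K wf v) (B K wf g) 0%N Hi).
Qed.

Lemma part3 a b : is_limit ltT a -> ltT b a ->
  alg_iso (B K wf a) (boxplus (B K wf b) (B K wf a)).
Proof.
move=> Ha Hb.
have [s [[Hbs Hsa] Hmin]] := @wf_min (fun u => ltT b u /\ ltT u a)
  (ltac:(apply: NNPP => Hn; apply: (proj2 Ha b); split => // -[u Hu]; apply: Hn; exists u; exact: Hu)).
have Hsucc : issucc ltT b s.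
  split => // -[u [Hbu Hus]]; exact: (Hmin u (conj Hbu (ltT_trans Hus Hsa)) Hus).
rewrite (B_limit Ha).
exact: (@rsum_absorb K _ (fun p : {v | ltT v a} => B K wf (proj1_sig p)) (B K wf b)
          (exist _ s Hsa) (part1 Hsucc)).
Qed.

End Main.

Theorem lemma6p9 (K : fieldType) (T : Type) (ltT : T -> T -> Prop)
  (wf : well_founded ltT)
  (ltT_trans : forall x y z, ltT x y -> ltT y z -> ltT x z)
  (ltT_total : forall x y, ltT x y \/ x = y \/ ltT y x)
  (T_countable : exists f : T -> nat, forall x y, f x = f y -> x = y) :
  (forall b a : T, issucc ltT b a ->
     alg_iso (B K wf a) (boxplus (B K wf b) (B K wf a))) /\
  (forall (n : nat) (g a : T), (0 < n)%N -> nsucc ltT n g a ->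
     alg_iso (B K wf a) (boxplus (B K wf g) (B K wf a))) /\
  (forall a b : T, is_limit ltT a -> ltT b a ->
     alg_iso (B K wf a) (boxplus (B K wf b) (B K wf a))).
Proof.
split; first by move=> b a; exact: (part1 K wf ltT_total).
split; first by move=> n g a; exact: (part2 K wf ltT_total).
move=> a b; exact: (part3 K wf ltT_trans ltT_total).
Qed.
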